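(* Let $0<\lambda<\frac{5-\sqrt{21}}{2}$ and let $K$ be the attractor of the IFS $f_1(x)=\lambda x$, $f_2(x)=\lambda x+2\lambda$, $f_3(x)=\lambda x+3\lambda-\lambda^2$, $f_4(x)=\lambda x+1-\lambda$. Then $U_{2i}=\emptyset$ for every integer $i\ge3$ such that $2i$ is not a power of $2$.
   Context: A coding of $x\in K$ is a sequence $(i_n)\in\{1,2,3,4\}^{\mathbb{N}}$ with $x=\lim_{n\to\infty}f_{i_1}\circ\cdots\circ f_{i_n}(0)$. $U_k$ denotes the set of $x\in K$ having exactly $k$ distinct codings. *)

(* Defs.v *)
From Stdlib Require Import Reals Lra Lia List.
Import ListNotations.
Open Scope R_scope.

(* The four maps of the IFS, indexed by digits 1..4 (other indices unused). *)
Definition f (lam : R) (i : nat) (x : R) : R :=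
  match i with
  | 1%nat => lam * x
  | 2%nat => lam * x + 2 * lam
  | 3%nat => lam * x + 3 * lam - lam ^ 2
  | _ => lam * x + 1 - lam
  end.

(* comp lam c n y = f_{c 0} o f_{c 1} o ... o f_{c (n-1)} (y) *)
Fixpoint comp (lam : R) (c : nat -> nat) (n : nat) (y : R) : R :=
  match n with
  | O => y
  | S m => comp lam c m (f lam (c m) y)
  end.

Definition is_digit_seq (c : nat -> nat) : Prop :=
  forall n, (1 <= c n <= 4)%nat.

Definition is_coding (lam : R) (c : nat -> nat) (x : R) : Prop :=
  is_digit_seq c /\ Un_cv (fun n => comp lam c n 0) x.

(* The attractor K: the set of points admitting a coding. *)
Definition in_K (lam : R) (x : R) : Prop := exists c, is_coding lam c x.

Definition exactly_codings (lam : R) (x : R) (k : nat) : Prop :=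
  exists l : list (nat -> nat),
    length l = k /\ NoDup l /\ (forall c, In c l <-> is_coding lam c x).

Definition U (lam : R) (k : nat) (x : R) : Prop :=
  in_K lam x /\ exactly_codings lam x k.

(* Main.v *)
Require Import Defs.
From Stdlib Require Import Reals Lra Lia List.
From Stdlib Require Import Classical FunctionalExtensionality.
Import Defs.
Open Scope R_scope.

Definition bb (lam : R) (j : nat) : R :=
  match j with
  | 1%nat => 0
  | 2%nat => 2 * lam
  | 3%nat => 3 * lam - lam ^ 2
  | _ => 1 - lam
  end.

Lemma f_aff (lam : R) (j : nat) (x : R) : f lam j x = lam * x + bb lam j.
Proof. destruct j as [|[|[|[|j]]]]; simpl; ring. Qed.

Definition finv lam j x := (x - bb lam j) / lam.
Definition shift (c : nat -> nat) : nat -> nat := fun n => c (S n).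
Definition ccons (j : nat) (c : nat -> nat) : nat -> nat :=
  fun n => match n with O => j | S m => c m end.

Lemma comp_S lam : forall n y c,
  comp lam c (S n) y = f lam (c 0%nat) (comp lam (shift c) n y).
Proof.
  induction n; intros y c. reflexivity.
  change (comp lam c (S (S n)) y) with (comp lam c (S n) (f lam (c (S n)) y)).
  rewrite IHn. reflexivity.
Qed.

Lemma Un_cv_S u l : Un_cv u l -> Un_cv (fun n => u (S n)) l.
Proof. intros H e He. destruct (H e He) as [N HN]. exists N. intros n Hn. apply HN. lia. Qed.

Lemma Un_cv_S_inv u l : Un_cv (fun n => u (S n)) l -> Un_cv u l.
Proof. intros H e He. destruct (H e He) as [N HN]. exists (S N). intros n Hn.
  destruct n. lia. apply HN. lia. Qed.

Lemma Un_cv_const a : Un_cv (fun _ => a) a.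
Proof. intros e He. exists 0%nat. intros. unfold R_dist. rewrite Rminus_diag, Rabs_R0. lra. Qed.

Lemma Un_cv_aff u v l a c l' : (forall n, v n = a * u n + c) -> l' = a * l + c ->
  Un_cv u l -> Un_cv v l'.
Proof.
  intros Hv Hl H. subst l'.
  assert (E : v = fun n => a * u n + c) by (apply functional_extensionality; auto).
  rewrite E. apply CV_plus. apply CV_mult. apply Un_cv_const. exact H. apply Un_cv_const.
Qed.

Lemma coding_unfold lam (Hp : 0 < lam) c x :
  is_coding lam c x <-> ((1 <= c 0%nat <= 4)%nat /\ is_coding lam (shift c) (finv lam (c 0%nat) x)).
Proof.
  split.
  - intros [Hd Hc]. split. apply Hd. split. intro n. apply Hd.
    apply (Un_cv_aff (fun n => comp lam c (S n) 0) _ x (/lam) (- bb lam (c 0%nat) / lam)).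
    + intro n. rewrite comp_S, f_aff. field. lra.
    + unfold finv. field. lra.
    + apply (Un_cv_S (fun n => comp lam c n 0)). exact Hc.
  - intros [H0 [Hd Hc]]. split.
    + intros [|n]. exact H0. apply Hd.
    + apply Un_cv_S_inv.
      refine (Un_cv_aff _ _ _ lam (bb lam (c 0%nat)) x _ _ Hc).
      * intro n. rewrite comp_S, f_aff. reflexivity.
      * unfold finv. field. lra.
Qed.

Lemma coding_cons lam (Hp : 0 < lam) j c x : (1 <= j <= 4)%nat ->
  is_coding lam c (finv lam j x) -> is_coding lam (ccons j c) x.
Proof. intros Hj Hc. apply coding_unfold; auto. Qed.

Lemma comp_01 lam (Hp : 0 < lam) (H2 : lam < 1/4) c : forall n y, 0 <= y <= 1 ->
  0 <= comp lam c n y <= 1.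
Proof.
  induction n; intros y Hy. exact Hy.
  simpl. apply IHn. rewrite f_aff.
  destruct (c n) as [|[|[|[|j]]]]; simpl; nra.
Qed.

Lemma lim_01 u l : (forall n, 0 <= u n <= 1) -> Un_cv u l -> 0 <= l <= 1.
Proof.
  intros Hu H. split.
  - destruct (Rle_or_lt 0 l) as [|Hl]; auto.
    destruct (H (- l)) as [N HN]. lra. specialize (HN N (le_n _)). specialize (Hu N).
    unfold R_dist in HN. apply Rabs_def2 in HN. lra.
  - destruct (Rle_or_lt l 1) as [|Hl]; auto.
    destruct (H (l - 1)) as [N HN]. lra. specialize (HN N (le_n _)). specialize (Hu N).
    unfold R_dist in HN. apply Rabs_def2 in HN. lra.
Qed.

Lemma coding_01 lam (Hp : 0 < lam) (H2 : lam < 1/4) c x : is_coding lam c x -> 0 <= x <= 1.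
Proof.
  intros [Hd Hc]. apply (lim_01 _ _ (fun n => comp_01 lam Hp H2 c n 0 ltac:(lra)) Hc).
Qed.

Lemma head_form lam (Hp : 0 < lam) (H2 : lam < 1/4) c x : is_coding lam c x ->
  exists x', 0 <= x' <= 1 /\ x = lam * x' + bb lam (c 0%nat).
Proof.
  intro H. apply coding_unfold in H; auto. destruct H as [_ H].
  exists (finv lam (c 0%nat) x). split. eapply coding_01; eauto.
  unfold finv. field. lra.
Qed.

Lemma digit4 (n : nat) : (1 <= n <= 4)%nat -> n = 1%nat \/ n = 2%nat \/ n = 3%nat \/ n = 4%nat.
Proof. lia. Qed.

Lemma overlap lam (Hp : 0 < lam) (H1 : lam^2 - 5*lam + 1 > 0) (H2 : lam < 1/4) c d x :
  is_coding lam c x -> is_coding lam d x -> c 0%nat <> d 0%nat ->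
  (c 0%nat = 2%nat /\ d 0%nat = 3%nat) \/ (c 0%nat = 3%nat /\ d 0%nat = 2%nat).
Proof.
  intros Hc Hd Hne.
  pose proof (proj1 Hc 0%nat) as Dc. pose proof (proj1 Hd 0%nat) as Dd.
  destruct (head_form lam Hp H2 c x Hc) as [x1 [Hx1 E1]].
  destruct (head_form lam Hp H2 d x Hd) as [x2 [Hx2 E2]].
  assert (0 <= lam * x1 <= lam) by nra.
  assert (0 <= lam * x2 <= lam) by nra.
  apply digit4 in Dc. apply digit4 in Dd.
  destruct Dc as [E|[E|[E|E]]]; destruct Dd as [F|[F|[F|F]]]; rewrite ?E, ?F in *;
    simpl bb in *; try lia; try (left; lia); try (right; lia); exfalso; nra.
Qed.

Lemma sec24 lam (Hp : 0 < lam) (H1 : lam^2 - 5*lam + 1 > 0) (H2 : lam < 1/4) c d x :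
  is_coding lam c x -> c 0%nat = 2%nat -> is_coding lam d x -> d 0%nat = 3%nat -> c 1%nat = 4%nat.
Proof.
  intros Hc E Hd F.
  destruct (head_form lam Hp H2 d x Hd) as [x2 [Hx2 E2]]. rewrite F in E2. simpl bb in E2.
  apply coding_unfold in Hc; auto. destruct Hc as [_ Hc]. rewrite E in Hc.
  pose proof (proj1 Hc 0%nat) as Dc. unfold shift in Dc.
  destruct (head_form lam Hp H2 _ _ Hc) as [x3 [Hx3 E3]]. unfold shift in E3.
  assert (Z : finv lam 2 x = x2 + 1 - lam) by (unfold finv; simpl bb; rewrite E2; field; lra).
  rewrite Z in E3.
  assert (0 <= lam * x3 <= lam) by nra.
  apply digit4 in Dc. destruct Dc as [G|[G|[G|G]]]; rewrite G in E3; simpl bb in E3; auto;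
    exfalso; nra.
Qed.

Lemma sec31 lam (Hp : 0 < lam) (H1 : lam^2 - 5*lam + 1 > 0) (H2 : lam < 1/4) c d x :
  is_coding lam c x -> c 0%nat = 3%nat -> is_coding lam d x -> d 0%nat = 2%nat -> c 1%nat = 1%nat.
Proof.
  intros Hc E Hd F.
  destruct (head_form lam Hp H2 d x Hd) as [x2 [Hx2 E2]]. rewrite F in E2. simpl bb in E2.
  apply coding_unfold in Hc; auto. destruct Hc as [_ Hc]. rewrite E in Hc.
  pose proof (proj1 Hc 0%nat) as Dc. unfold shift in Dc.
  destruct (head_form lam Hp H2 _ _ Hc) as [x3 [Hx3 E3]]. unfold shift in E3.
  assert (Z : finv lam 3 x = x2 - 1 + lam) by (unfold finv; simpl bb; rewrite E2; field; lra).
  rewrite Z in E3.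
  assert (0 <= lam * x3 <= lam) by nra.
  apply digit4 in Dc. destruct Dc as [G|[G|[G|G]]]; rewrite G in E3; simpl bb in E3; auto;
    exfalso; nra.
Qed.

Lemma nodup_map_inj {A B : Type} (g : A -> B) : forall l : list A, NoDup l ->
  (forall a b, In a l -> In b l -> g a = g b -> a = b) -> NoDup (map g l).
Proof.
  induction l as [|a l IH]; intros Hn Hi; simpl. constructor.
  inversion Hn; subst. constructor.
  - intro Hin. apply in_map_iff in Hin. destruct Hin as [b [Eb Hb]].
    assert (b = a) by (apply Hi; simpl; auto). subst. contradiction.
  - apply IH; auto. intros. apply Hi; simpl; auto.
Qed.

Lemma map_exact (l : list (nat -> nat)) (g h : (nat -> nat) -> (nat -> nat))
  (Q R : (nat -> nat) -> Prop) :
  NoDup l -> (forall c, In c l <-> Q c) -> (forall c, Q c -> h (g c) = c) ->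
  (forall c, Q c -> R (g c)) -> (forall c', R c' -> Q (h c') /\ g (h c') = c') ->
  NoDup (map g l) /\ (forall c', In c' (map g l) <-> R c').
Proof.
  intros Hn Hl Hhg HR HQ. split.
  - apply nodup_map_inj; auto. intros a b Ha Hb E.
    rewrite <- (Hhg a), <- (Hhg b), E; auto; apply Hl; auto.
  - intro c'. rewrite in_map_iff. split.
    + intros [c [E Hc]]. subst. apply HR, Hl, Hc.
    + intro Hc. destruct (HQ c' Hc) as [H1 H2]. exists (h c'). split; auto. apply Hl; auto.
Qed.

Lemma exact_unique lam y a b : exactly_codings lam y a -> exactly_codings lam y b -> a = b.
Proof.
  intros [l1 [L1 [N1 H1]]] [l2 [L2 [N2 H2]]]. subst.
  apply Nat.le_antisymm; apply NoDup_incl_length; auto; intros c Hc.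
  apply H2, H1, Hc. apply H1, H2, Hc.
Qed.

Lemma length_split (l : list (nat -> nat)) :
  (forall c, In c l -> c 0%nat = 2%nat \/ c 0%nat = 3%nat) ->
  length l = (length (filter (fun c => Nat.eqb (c 0%nat) 2) l)
              + length (filter (fun c => Nat.eqb (c 0%nat) 3) l))%nat.
Proof.
  induction l as [|a l IH]; intros H; simpl. reflexivity.
  rewrite IH by (intros; apply H; simpl; auto).
  destruct (H a (or_introl eq_refl)) as [E|E]; rewrite E; simpl; lia.
Qed.

Lemma ccons_shift c : ccons (c 0%nat) (shift c) = c.
Proof. apply functional_extensionality. intros [|n]; reflexivity. Qed.

Lemma L1 lam (Hp : 0 < lam) x k j : (1 <= j <= 4)%nat ->
  (forall c, is_coding lam c x -> c 0%nat = j) ->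
  exactly_codings lam x k -> exactly_codings lam (finv lam j x) k.
Proof.
  intros Hj Hall [l [Hlen [Hn Hl]]].
  destruct (map_exact l shift (ccons j) (fun c => is_coding lam c x)
     (fun c => is_coding lam c (finv lam j x)) Hn Hl) as [N M].
  - intros c Hc. rewrite <- (Hall c Hc). apply ccons_shift.
  - intros c Hc. pose proof (Hall c Hc) as E. apply coding_unfold in Hc; auto.
    rewrite E in Hc. apply Hc.
  - intros c' Hc'. split. apply coding_cons; auto. reflexivity.
  - exists (map shift l). rewrite length_map. auto.
Qed.

Definition yy lam x := finv lam 4 (finv lam 2 x).

Lemma coding2 lam (Hp : 0 < lam) c x : c 0%nat = 2%nat -> c 1%nat = 4%nat ->
  (is_coding lam c x <-> is_coding lam (shift (shift c)) (yy lam x)).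
Proof.
  intros E F. rewrite coding_unfold by auto. rewrite (coding_unfold lam Hp (shift c)).
  change (shift c 0%nat) with (c 1%nat). rewrite E, F. unfold yy. split.
  - intros [_ [_ H]]. exact H.
  - intro H. split. lia. split. lia. exact H.
Qed.

Lemma coding3 lam (Hp : 0 < lam) c x : c 0%nat = 3%nat -> c 1%nat = 1%nat ->
  (is_coding lam c x <-> is_coding lam (shift (shift c)) (yy lam x)).
Proof.
  intros E F. rewrite coding_unfold by auto. rewrite (coding_unfold lam Hp (shift c)).
  change (shift c 0%nat) with (c 1%nat). rewrite E, F.
  replace (yy lam x) with (finv lam 1 (finv lam 3 x))
    by (unfold yy, finv; simpl; field; lra). split.
  - intros [_ [_ H]]. exact H.
  - intro H. split. lia. split. lia. exact H.
Qed.

Lemma L2 lam (Hp : 0 < lam) (H1 : lam^2 - 5*lam + 1 > 0) (H2 : lam < 1/4) x k p q :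
  is_coding lam p x -> p 0%nat = 2%nat -> is_coding lam q x -> q 0%nat = 3%nat ->
  exactly_codings lam x k -> exists a, k = (2 * a)%nat /\ exactly_codings lam (yy lam x) a.
Proof.
  intros Hp2 Ep Hq3 Eq [l [Hlen [Hn Hl]]].
  assert (Hall : forall c, is_coding lam c x -> c 0%nat = 2%nat \/ c 0%nat = 3%nat).
  { intros c Hc. destruct (Nat.eq_dec (c 0%nat) 2) as [E|E]. left; auto.
    destruct (overlap lam Hp H1 H2 c p x Hc Hp2) as [[? ?]|[? ?]]; lia. }
  set (l2 := filter (fun c => Nat.eqb (c 0%nat) 2) l).
  set (l3 := filter (fun c => Nat.eqb (c 0%nat) 3) l).
  destruct (map_exact l2 (fun c => shift (shift c)) (fun c' => ccons 2 (ccons 4 c'))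
     (fun c => is_coding lam c x /\ c 0%nat = 2%nat) (fun c => is_coding lam c (yy lam x)))
     as [N2 M2].
  - apply NoDup_filter; auto.
  - intro c. unfold l2. rewrite filter_In, Nat.eqb_eq, Hl. tauto.
  - intros c [Hc E]. pose proof (sec24 lam Hp H1 H2 c q x Hc E Hq3 Eq) as F.
    apply functional_extensionality. intros [|[|n]]; simpl; auto.
  - intros c [Hc E]. apply (proj1 (coding2 lam Hp c x E (sec24 lam Hp H1 H2 c q x Hc E Hq3 Eq))). exact Hc.
  - intros c' Hc'. split; [|reflexivity]. split; [|reflexivity].
    apply (proj2 (coding2 lam Hp (ccons 2 (ccons 4 c')) x eq_refl eq_refl)). exact Hc'.
  - destruct (map_exact l3 (fun c => shift (shift c)) (fun c' => ccons 3 (ccons 1 c'))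
     (fun c => is_coding lam c x /\ c 0%nat = 3%nat) (fun c => is_coding lam c (yy lam x)))
     as [N3 M3].
    + apply NoDup_filter; auto.
    + intro c. unfold l3. rewrite filter_In, Nat.eqb_eq, Hl. tauto.
    + intros c [Hc E]. pose proof (sec31 lam Hp H1 H2 c p x Hc E Hp2 Ep) as F.
      apply functional_extensionality. intros [|[|n]]; simpl; auto.
    + intros c [Hc E]. apply (proj1 (coding3 lam Hp c x E (sec31 lam Hp H1 H2 c p x Hc E Hp2 Ep))). exact Hc.
    + intros c' Hc'. split; [|reflexivity]. split; [|reflexivity].
      apply (proj2 (coding3 lam Hp (ccons 3 (ccons 1 c')) x eq_refl eq_refl)). exact Hc'.
    + assert (X2 : exactly_codings lam (yy lam x) (length l2))
        by (exists (map (fun c => shift (shift c)) l2); rewrite length_map; auto).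
      assert (X3 : exactly_codings lam (yy lam x) (length l3))
        by (exists (map (fun c => shift (shift c)) l3); rewrite length_map; auto).
      pose proof (exact_unique _ _ _ _ X2 X3) as E23.
      exists (length l2). split; auto.
      rewrite <- Hlen. rewrite (length_split l) by (intros c Hc; apply Hall, Hl, Hc).
      fold l2 l3. lia.
Qed.

Lemma exact_pos lam x k c : exactly_codings lam x k -> is_coding lam c x -> (1 <= k)%nat.
Proof.
  intros [l [Hlen [_ Hl]]] Hc. apply Hl in Hc. destruct l. destruct Hc. simpl in Hlen. lia.
Qed.

Lemma pow2 lam (Hp : 0 < lam) (H1 : lam^2 - 5*lam + 1 > 0) (H2 : lam < 1/4) :
  forall k x c, exactly_codings lam x k -> is_coding lam c x -> exists m, k = (2 ^ m)%nat.
Proof.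
  intro k. induction k as [k IH] using (well_founded_induction Wf_nat.lt_wf). intros x c0 Hex Hc0.
  assert (OV : forall x a d, is_coding lam a x -> is_coding lam d x -> a 0%nat <> d 0%nat ->
            exactly_codings lam x k -> exists m, k = (2 ^ m)%nat).
  { intros y a d Ha Hd Ne Hey.
    assert (G : exists a', k = (2 * a')%nat /\ exactly_codings lam (yy lam y) a'
                 /\ exists c, is_coding lam c (yy lam y)).
    { destruct (overlap lam Hp H1 H2 a d y Ha Hd Ne) as [[E F]|[E F]].
      - destruct (L2 lam Hp H1 H2 y k a d Ha E Hd F Hey) as [a' [Ek Ea]].
        exists a'. repeat split; auto. exists (shift (shift a)).
        apply (proj1 (coding2 lam Hp a y E (sec24 lam Hp H1 H2 a d y Ha E Hd F))). exact Ha.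
      - destruct (L2 lam Hp H1 H2 y k d a Hd F Ha E Hey) as [a' [Ek Ea]].
        exists a'. repeat split; auto. exists (shift (shift d)).
        apply (proj1 (coding2 lam Hp d y F (sec24 lam Hp H1 H2 d a y Hd F Ha E))). exact Hd. }
    destruct G as [a' [Ek [Ea [c Hc]]]].
    pose proof (exact_pos _ _ _ _ Ea Hc).
    destruct (IH a' ltac:(lia) _ _ Ea Hc) as [m Em]. exists (S m). simpl. lia. }
  destruct Hex as [l [Hlen [Hn Hl]]].
  destruct l as [|a [|b l']].
  - apply Hl in Hc0. destruct Hc0.
  - simpl in Hlen. exists 0%nat. simpl. lia.
  - assert (Hab : a <> b) by (inversion Hn; subst; intro E; subst; apply H3; simpl; auto).
    assert (Ha : is_coding lam a x) by (apply Hl; simpl; auto).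
    assert (Hb : is_coding lam b x) by (apply Hl; simpl; auto).
    assert (Hex : exactly_codings lam x k) by (exists (a :: b :: l'); auto).
    clear Hlen Hn Hl.
    assert (En : exists n, a n <> b n).
    { apply not_all_ex_not. intro E. apply Hab. apply functional_extensionality. exact E. }
    destruct En as [n En]. clear Hab c0 Hc0.
    revert x a b Ha Hb En Hex. induction n as [|n IHn]; intros x a b Ha Hb En Hex.
    + eapply (OV x a b); eauto.
    + destruct (Nat.eq_dec (a 0%nat) (b 0%nat)) as [E|E]; [|exact (OV x a b Ha Hb E Hex)].
      destruct (classic (forall d, is_coding lam d x -> d 0%nat = a 0%nat)) as [All|NAll].
      * apply (IHn (finv lam (a 0%nat) x) (shift a) (shift b)).
        -- apply coding_unfold in Ha; auto. apply Ha.
        -- apply coding_unfold in Hb; auto. rewrite <- E in Hb. apply Hb.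
        -- exact En.
        -- apply L1; auto. apply (proj1 Ha).
      * apply not_all_ex_not in NAll. destruct NAll as [d Hd].
        apply imply_to_and in Hd. destruct Hd as [Hd Nd].
        apply (OV x a d Ha Hd); auto.
Qed.

Theorem lemma2p31 (lam : R) (Hpos : 0 < lam) (Hlt : lam < (5 - sqrt 21) / 2)
  (i : nat) (Hi : (3 <= i)%nat) (Hnp : ~ (exists m : nat, (2 * i = 2 ^ m)%nat)) :
  forall x : R, ~ U lam (2 * i) x.
Proof.
  intros x [[c Hc] Hex].
  pose proof (sqrt_pos 21) as S0.
  pose proof (sqrt_sqrt 21 ltac:(lra)) as S1.
  assert (S2 : sqrt 21 > 9/2) by nra.
  assert (H2 : lam < 1/4) by lra.
  assert (H1 : lam^2 - 5*lam + 1 > 0) by nra.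
  apply Hnp. exact (pow2 lam Hpos H1 H2 _ x c Hex Hc).
Qed.
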